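(* There is a constant $C<\infty$, independent of $m\in(0,1)$ and of $K$, such that for all positive integers $K$ and all $m\in(0,1)$, $$\mathbb{E}\big[|\hat\lambda_K(m)-\lambda(m)|^\gamma\big]\le CK^{-\gamma d/2}.$$
   Context: $\alpha=(\alpha_x)_{x\in\mathbb{Z}^d}$ is a stationary random field (expectation $\mathbb{E}$) with $|\alpha_x|\le B<\infty$, satisfying the mixing condition: there exist $\gamma\ge\max\{4,2(d+2)/d^2\}$ and $C<\infty$ such that for all positive integers $l,K$ and every function $f$ of $(\alpha_x)_{x\in\Lambda_l}$ with $\mathbb{E}[f]=0$, $\mathbb{E}[|K^{-d}\sum_{x\in\Lambda_K}\tau_xf|^\gamma]\le C(l/K)^{\gamma d/2}\mathbb{E}[|f|^\gamma]$, where $\Lambda_n$ is a box of side length $n$ and $(\tau_x\alpha)_y=\alpha_{x+y}$, $\tau_xf(\alpha)=f(\tau_x\alpha)$; $\gamma$ in the claim is this exponent. The annealed chemical potential $\lambda(m)$ is defined by $\mathbb{E}[e^{\alpha_0+\lambda}/(1+e^{\alpha_0+\lambda})]=m$, and the empirical chemical potential $\hat\lambda_K(m)$ on $\Lambda_K$ is defined by $m=K^{-d}\sum_{x\in\Lambda_K}e^{\hat\lambda_K+\alpha_x}/(1+e^{\hat\lambda_K+\alpha_x})$. *)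

(* Defs.v *)
From HB Require Import structures.
From mathcomp Require Import all_boot all_order all_algebra.
From mathcomp Require Import all_classical all_reals all_analysis.
Set Implicit Arguments.
Unset Strict Implicit.
Unset Printing Implicit Defensive.
Import Order.TTheory GRing.Theory Num.Theory.
Local Open Scope classical_set_scope.
Local Open Scope ring_scope.

Definition site (d : nat) := 'rV[int]_d.

(* Point of the box Lambda_n = {0,...,n-1}^d indexed by t. *)
Definition boxpt (d n : nat) (t : {ffun 'I_d -> 'I_n}) : site d :=
  \row_i ((t i : nat)%:Z).

Definition in_box (d n : nat) (x : site d) : Prop :=
  exists t : {ffun 'I_d -> 'I_n}, x = boxpt t.

Definition conf (R : realType) (T : Type) (d : nat)
  (alpha : site d -> T -> R) (w : T) : site d -> R := fun x => alpha x w.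

Definition tau_shift (R : realType) (d : nat) (x : site d) (c : site d -> R)
  : site d -> R := fun y => c (x + y).

Definition cyl_sets (R : realType) (d l : nat) : set (set (site d -> R)) :=
  fun S => exists (x : site d) (A : set R),
    in_box l x /\ measurable A /\ S = (fun c => c x) @^-1` A.

(* f is a (Borel) function of (c_x)_{x in Lambda_l} *)
Definition local_fun (R : realType) (d l : nat) (f : (site d -> R) -> R) :=
  forall B : set R, measurable B -> <<s @cyl_sets R d l >> (f @^-1` B).

Definition stationary (R : realType) (dT : measure_display)
  (T : measurableType dT) (P : probability T R) (d : nat)
  (alpha : site d -> T -> R) : Prop :=
  forall (n : nat) (xs : 'I_n -> site d) (A : 'I_n -> set R) (y : site d),
    (forall i, measurable (A i)) ->
    P [set w | forall i, A i (alpha (xs i) w)] =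
    P [set w | forall i, A i (alpha (y + xs i) w)].

Definition fermi (R : realType) (t : R) : R := expR t / (1 + expR t).

(* Main.v *)
Require Import Defs.
From HB Require Import structures.
From mathcomp Require Import all_boot all_order all_algebra.
From mathcomp Require Import all_classical all_reals all_analysis.
From mathcomp Require Import ring lra.
Import Order.TTheory GRing.Theory Num.Theory numFieldNormedType.Exports.
Local Open Scope classical_set_scope.
Local Open Scope ring_scope.

Section R.
Variable R : realType.
Implicit Types x y z m : R.

Lemma fermiE z : fermi z = expR z / (1 + expR z).
Proof. by []. Qed.

Lemma fermi_ge0 z : 0 <= fermi z.
Proof. by rewrite fermiE divr_ge0 // ?addr_ge0 // expR_ge0. Qed.

Lemma fermi_le1 z : fermi z <= 1.
Proof.
rewrite fermiE ler_pdivrMr ?mul1r; last by rewrite ltr_pwDl // expR_ge0.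
by rewrite lerDr.
Qed.

Lemma fermi_mono x y : x <= y -> fermi x <= fermi y.
Proof.
move=> xy; rewrite !fermiE.
have ex := expR_gt0 x; have ey := expR_gt0 y.
have exy : expR x <= expR y by rewrite ler_expR.
rewrite ler_pdivrMr ?(ltr_pwDl ltr01 (ltW ey)) //.
rewrite mulrAC ler_pdivlMr ?(ltr_pwDl ltr01 (ltW ex)) //.
nra.
Qed.

Lemma fermi_ge_m m z : 0 < m < 1 -> m <= fermi z -> m / (1 - m) <= expR z.
Proof.
case/andP=> m0 m1; rewrite fermiE => h.
have ez := expR_gt0 z.
rewrite ler_pdivrMr ?subr_gt0 //.
move: h; rewrite ler_pdivlMr ?(ltr_pwDl ltr01 (ltW ez)) //.
nra.
Qed.

Lemma fermi_le_m m z : 0 < m < 1 -> fermi z <= m -> expR z <= m / (1 - m).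
Proof.
case/andP=> m0 m1; rewrite fermiE => h.
have ez := expR_gt0 z.
rewrite ler_pdivlMr ?subr_gt0 //.
move: h; rewrite ler_pdivrMr ?(ltr_pwDl ltr01 (ltW ez)) //.
nra.
Qed.

Lemma key1 x y lo hi : 0 < lo -> lo <= expR x <= hi -> lo <= expR y <= hi ->
  y <= x -> x - y <= (fermi x - fermi y) * ((1 + hi) ^+ 2 / lo).
Proof.
move=> lo0 /andP[lx xh] /andP[ly yh] yx.
set X := expR x in lx xh *; set Y := expR y in ly yh *.
have h1 : x - y <= (X - Y) / Y.
  have := expR_ge1Dx (x - y); rewrite expRB -/X -/Y.
  have Y0 : 0 < Y by lra.
  rewrite mulrBl divff ?gt_eqF //. lra.
have XY : Y <= X by rewrite ler_expR.
apply: (le_trans h1).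
rewrite !fermiE -/X -/Y.
have Y0 : 0 < Y by lra.
have X0 : 0 < X by lra.
have -> : X / (1 + X) - Y / (1 + Y) = (X - Y) / ((1 + X) * (1 + Y)).
  field; apply/andP; split; rewrite gt_eqF //; lra.
rewrite -subr_ge0.
have -> : (X - Y) / ((1 + X) * (1 + Y)) * ((1 + hi) ^+ 2 / lo) - (X - Y) / Y
   = (X - Y) * (Y * (1 + hi) ^+ 2 - lo * ((1 + X) * (1 + Y))) / (Y * lo * ((1 + X) * (1 + Y))).
  field; rewrite !gt_eqF //; try lra; rewrite ?mulr_gt0 //; lra.
have h2 : (1 + X) * (1 + Y) <= (1 + hi) ^+ 2 by rewrite expr2; apply: ler_pM; lra.
apply: divr_ge0; last by rewrite !mulr_ge0 //; lra.
apply: mulr_ge0; first lra.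
rewrite subr_ge0; apply: ler_pM; try lra.
by apply: mulr_ge0; lra.
Qed.

Lemma bound_g (r V E : R) : 0 < r -> 1 <= E -> r / E <= V <= r * E ->
  (1 + r * E) ^+ 2 / (r / E) * `|V / (1 + V) - r / (1 + r)| <= E ^+ 5.
Proof.
move=> r0 E1 /andP[lV Vh].
have E0 : 0 < E by lra.
have rE : r / E <= r * E.
  rewrite ler_pdivrMr //; rewrite -mulrA; apply: ler_peMr; nra.
have V0 : 0 < V.
  apply: lt_le_trans lV; exact: divr_gt0.
have -> : V / (1 + V) - r / (1 + r) = (V - r) / ((1 + V) * (1 + r)).
  field; rewrite !gt_eqF //; lra.
rewrite normrM (@ger0_norm _ ((1 + V) * (1 + r))^-1); last by rewrite invr_ge0 mulr_ge0 //; lra.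
have ah : `|V - r| <= r * E.
  case: (lerP r V) => h.
    lra.
  nra.
have a0 : 0 <= `|V - r| by rewrite normr_ge0.
move: a0 ah; set a := `|V - r| => a0 ah.
have h1 : 1 + r * E <= E * (1 + r) by nra.
have hV : r <= E * V.
  by move: lV; rewrite ler_pdivrMr // mulrC.
have h2 : 1 + r * E <= E ^+ 2 * (1 + V) by rewrite expr2; nra.
have -> : (1 + r * E) ^+ 2 / (r / E) * (a / ((1 + V) * (1 + r)))
   = ((1 + r * E) ^+ 2 * E * a) / (r * ((1 + V) * (1 + r))).
  field; rewrite !gt_eqF //; lra.
rewrite ler_pdivrMr; last by rewrite !mulr_gt0 //; lra.
have h3 : (1 + r * E) ^+ 2 <= E ^+ 3 * ((1 + V) * (1 + r)).
  rewrite expr2 (_ : E ^+ 3 * ((1 + V) * (1 + r)) = (E ^+ 2 * (1 + V)) * (E * (1 + r))); last by ring.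
  apply: ler_pM => //; lra.
have h4 : (1 + r * E) ^+ 2 * E * a <= (E ^+ 3 * ((1 + V) * (1 + r))) * E * (r * E).
  apply: ler_pM; [| |by rewrite ler_pM2r // |by []].
  by rewrite mulr_ge0 // ?sqr_ge0 //; lra.
  by [].
apply: (le_trans h4); rewrite le_eqVlt; apply/orP; left; apply/eqP.
rewrite !exprS expr0; ring.
Qed.

Lemma fermi_cont : continuous (fun x : R => fermi x).
Proof.
move=> x; rewrite /fermi.
apply: cvgM; first exact: continuous_expR.
apply: cvgV; first by rewrite gt_eqF // ltr_pwDl // expR_ge0.
apply: cvgD; first exact: cvg_cst.
exact: continuous_expR.
Qed.

Lemma sum_cst (d K : nat) (c : R) :
  \sum_(t : {ffun 'I_d -> 'I_K}) c = K%:R ^+ d * c.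
Proof.
by rewrite sumr_const card_ffun !card_ord -natrX mulr_natl.
Qed.

Lemma avg_le (d K : nat) (a : {ffun 'I_d -> 'I_K} -> R) (c : R) : (0 < K)%N ->
  (forall t, a t <= c) -> (K%:R ^+ d)^-1 * \sum_t a t <= c.
Proof.
move=> K0 h; have N0 : 0 < K%:R ^+ d :> R by rewrite exprn_gt0 // ltr0n.
rewrite ler_pdivrMl //; rewrite -sum_cst; exact: ler_sum.
Qed.

Lemma avg_ge (d K : nat) (a : {ffun 'I_d -> 'I_K} -> R) (c : R) : (0 < K)%N ->
  (forall t, c <= a t) -> c <= (K%:R ^+ d)^-1 * \sum_t a t.
Proof.
move=> K0 h; have N0 : 0 < K%:R ^+ d :> R by rewrite exprn_gt0 // ltr0n.
rewrite ler_pdivlMl //; rewrite -sum_cst; exact: ler_sum.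
Qed.

Lemma exp_range (z c B r : R) : 0 < r -> `|c| <= B ->
  r <= expR (z + B) -> expR (z - B) <= r ->
  r / expR B ^+ 2 <= expR (z + c) <= r * expR B ^+ 2.
Proof.
move=> r0 cB h1 h2.
have e0 := expR_gt0 B.
have Z0 := expR_gt0 z; have C0 := expR_gt0 c.
move: h1 h2; rewrite expRD expRB expRD => h1 h2.
have h2' : expR z <= r * expR B by rewrite -ler_pdivrMr.
have cl : expR c <= expR B by rewrite ler_expR; move: cB; rewrite ler_norml; lra.
have cg : 1 <= expR c * expR B.
  rewrite -expRD -expR0 ler_expR; move: cB; rewrite ler_norml; lra.
apply/andP; split.
  rewrite ler_pdivrMr ?exprn_gt0 // expr2.
  rewrite (_ : expR z * expR c * (expR B * expR B) = (expR z * expR B) * (expR c * expR B)); last by ring.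
  rewrite -[r]mulr1; apply: ler_pM; lra.
rewrite expr2 mulrA; apply: ler_pM; lra.
Qed.

Lemma key_sum (d K : nat) (al : {ffun 'I_d -> 'I_K} -> R) (a b lo hi : R) :
  (0 < K)%N -> 0 < lo -> b <= a ->
  (forall t, lo <= expR (a + al t) <= hi) ->
  (forall t, lo <= expR (b + al t) <= hi) ->
  a - b <= (1 + hi) ^+ 2 / lo *
    ((K%:R ^+ d)^-1 * \sum_t fermi (a + al t) - (K%:R ^+ d)^-1 * \sum_t fermi (b + al t)).
Proof.
move=> K0 lo0 ba ha hb.
rewrite -mulrBr -sumrB mulrCA mulr_sumr.
apply: avg_ge => // t.
have := key1 _ _ _ _ lo0 (ha t) (hb t); rewrite lerD2r => /(_ ba).
rewrite (_ : a + al t - (b + al t) = a - b); last by ring.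
by rewrite mulrC.
Qed.

Lemma lra1 (a x B : R) : -B <= x <= B ->
  [/\ x + a <= a + B, a - B <= x + a, a + x <= a + B & a - B <= a + x].
Proof. by case/andP=> h1 h2; split; lra. Qed.

End R.

Section M.
Local Open Scope ereal_scope.
Lemma le_integral_nm d (T : measurableType d) (R : realType)
  (mu : {measure set T -> \bar R}) (f1 f2 : T -> \bar R) :
  (forall x, 0 <= f1 x) -> (forall x, f1 x <= f2 x) ->
  \int[mu]_x f1 x <= \int[mu]_x f2 x.
Proof.
move=> f10 f12.
have f20 x : 0 <= f2 x by exact: le_trans (f10 x) (f12 x).
rewrite !ge0_integralTE //.
apply: ereal_sup_le => _ [h hf <-]; exists h => //= x.
exact: le_trans (hf x) (f12 x).
Qed.
End M.

Theorem lemma10p3 (R : realType) (dT : measure_display) (T : measurableType dT)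
  (P : probability T R) (d : nat) (alpha : site d -> T -> R) (B gamma Cmix : R)
  (lambda : R -> R) (lamhat : nat -> R -> T -> R) :
  (0 < d)%N ->
  (forall x, measurable_fun setT (alpha x)) ->
  stationary P alpha ->
  (forall x w, `|alpha x w| <= B) ->
  4 <= gamma -> 2 * (d%:R + 2) / (d%:R ^+ 2) <= gamma ->
  (* mixing condition *)
  (forall (l K : nat) (f : (site d -> R) -> R), (0 < l)%N -> (0 < K)%N ->
     @local_fun R d l f ->
     P.-integrable setT (fun w => (f (conf alpha w))%:E) ->
     (\int[P]_w (f (conf alpha w))%:E = 0)%E ->
     (\int[P]_w ((`|f (conf alpha w)| `^ gamma)%:E) < +oo)%E ->
     (\int[P]_w ((`| (K%:R ^+ d)^-1 *
          \sum_(t : {ffun 'I_d -> 'I_K}) f (tau_shift (boxpt t) (conf alpha w)) |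
          `^ gamma)%:E)
      <= (Cmix * (l%:R / K%:R) `^ (gamma * d%:R / 2))%:E *
         \int[P]_w ((`|f (conf alpha w)| `^ gamma)%:E))%E) ->
  (* annealed chemical potential *)
  (forall m, 0 < m < 1 ->
     (\int[P]_w (fermi (alpha 0 w + lambda m))%:E = m%:E)%E) ->
  (* empirical chemical potential *)
  (forall (K : nat) m w, (0 < K)%N -> 0 < m < 1 ->
     m = (K%:R ^+ d)^-1 *
         \sum_(t : {ffun 'I_d -> 'I_K}) fermi (lamhat K m w + alpha (boxpt t) w)) ->
  exists C : R, forall (K : nat) m, (0 < K)%N -> 0 < m < 1 ->
    (\int[P]_w ((`|lamhat K m w - lambda m| `^ gamma)%:E)
      <= (C * K%:R `^ (- (gamma * d%:R / 2)))%:E)%E.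
Proof.
move=> d0 malpha stat Bb g4 g2 mix ann emp.
exists (Num.max Cmix 0 * (expR B ^+ 2 ^+ 5) `^ gamma).
move=> K m K0 m01.
have /andP[m0 m1] := m01.
have g0 : 0 <= gamma by lra.
set lam := lambda m.
set r := m / (1 - m).
have r0 : 0 < r by rewrite divr_gt0 // subr_gt0.
have mr : m = r / (1 + r).
  by rewrite /r; field; rewrite subrK oner_eq0 andbT subr_eq0 gt_eqF.
set E := expR B ^+ 2.
have E1 : forall w : T, 1 <= E.
  move=> w; have := Bb 0 w => hB.
  have B0 : 0 <= B by apply: le_trans hB.
  have eB : 1 <= expR B by apply: le_trans (expR_ge1Dx B); lra.
  by rewrite /E; apply: exprn_ege1.
have Pc : forall c : R, (\int[P]_w (c%:E) = c%:E)%E.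
  move=> c; rewrite (integral_cst P measurableT c%:E).
  by rewrite -[in RHS](mule1 c%:E); congr (_ * _)%E; exact: probability_setT.
have aB : forall x w, -B <= alpha x w <= B.
  by move=> x w; rewrite -ler_norml.
have hl1 : r <= expR (lam + B).
  apply: fermi_ge_m => //; rewrite -lee_fin -(ann m m01) -(Pc (fermi (lam + B))).
  apply: le_integral_nm => w; rewrite lee_fin ?fermi_ge0 //.
  by apply: fermi_mono; case: (@lra1 _ lam _ _ (aB 0 w)).
have hl2 : expR (lam - B) <= r.
  apply: fermi_le_m => //; rewrite -lee_fin -(ann m m01) -(Pc (fermi (lam - B))).
  apply: le_integral_nm => w; rewrite lee_fin ?fermi_ge0 //.
  by apply: fermi_mono; case: (@lra1 _ lam _ _ (aB 0 w)).
have lrange : forall x w, r / E <= expR (lam + alpha x w) <= r * E.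
  by move=> x w; apply: exp_range.
have hrange : forall (w : T) (t : {ffun 'I_d -> 'I_K}), r / E <= expR (lamhat K m w + alpha (boxpt t) w) <= r * E.
  move=> w; have em := emp K m w K0 m01.
  have h1 : r <= expR (lamhat K m w + B).
    apply: fermi_ge_m => //; rewrite {1}em; apply: avg_le => // t.
    by apply: fermi_mono; case: (@lra1 _ (lamhat K m w) _ _ (aB (boxpt t) w)).
  have h2 : expR (lamhat K m w - B) <= r.
    apply: fermi_le_m => //; rewrite {2}em; apply: avg_ge => // t.
    by apply: fermi_mono; case: (@lra1 _ (lamhat K m w) _ _ (aB (boxpt t) w)).
  by move=> t; apply: exp_range.
set lo := r / E.
set hi := r * E.
have lo0 : 0 < lo by rewrite divr_gt0 // /E exprn_gt0 // expR_gt0.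
set M0 := (1 + hi) ^+ 2 / lo.
have M00 : 0 <= M0 by rewrite /M0 divr_ge0 // ?sqr_ge0 // ltW.
set h := fun x : R => M0 * (fermi (x + lam) - m).
have hcont : continuous h.
  move=> x; rewrite /h; apply: cvgM; first exact: cvg_cst.
  apply: cvgB; last exact: cvg_cst.
  apply: (@continuous_comp _ _ _ (fun y : R => y + lam) (fun y => fermi y)).
    by apply: cvgD; [exact: cvg_id | exact: cvg_cst].
  exact: fermi_cont.
have hmeas : measurable_fun setT h := measurable_realfun.continuous_measurable_fun hcont.
set f := fun c : site d -> R => h (c 0).
have fbound : forall w, `|f (conf alpha w)| <= E ^+ 5.
  move=> w; rewrite /f /h /conf normrM ger0_norm //.
  have := @bound_g _ _ _ _ r0 (E1 w) (lrange 0 w).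
  move=> H; rewrite -mr in H; rewrite /M0 /hi /lo fermiE (addrC (alpha 0 w)); exact: H.
have mF : measurable_fun setT (fun w => fermi (alpha 0 w + lam)).
  apply: (measurableT_comp (measurable_realfun.continuous_measurable_fun (@fermi_cont R))).
  by apply: measurable_realfun.measurable_funD => //; exact: measurable_cst.
have intF : P.-integrable setT (fun w => (fermi (alpha 0 w + lam))%:E).
  apply: (@le_integrable _ _ _ P setT measurableT _ (EFin \o cst 1)).
      exact/measurable_realfun.measurable_EFinP.
    2: exact: finite_measure_integrable_cst.
  move=> w _ /=; rewrite lee_fin ger0_norm ?fermi_ge0 // normr1.
  exact: fermi_le1.
have mf : measurable_fun setT (fun w => f (conf alpha w)).
  exact: (measurableT_comp hmeas (malpha 0)).
have intf : P.-integrable setT (fun w => (f (conf alpha w))%:E).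
  apply: (@le_integrable _ _ _ P setT measurableT _ (EFin \o cst (E ^+ 5))).
      exact/measurable_realfun.measurable_EFinP.
    2: exact: finite_measure_integrable_cst.
  move=> w _ /=; rewrite lee_fin (ger0_norm (x := E ^+ 5)).
    exact: fbound.
  exact: le_trans (normr_ge0 _) (fbound w).
have int0 : (\int[P]_w (f (conf alpha w))%:E = 0)%E.
  rewrite /f /h /conf.
  under eq_integral do rewrite EFinM EFinB.
  rewrite integralZl //; last first.
    apply: integrableB => //; exact: finite_measure_integrable_cst.
  rewrite integralB //; last exact: finite_measure_integrable_cst.
  by rewrite ann // Pc subee // mule0.
have If : (\int[P]_w ((`|f (conf alpha w)| `^ gamma)%:E) <= ((E ^+ 5) `^ gamma)%:E)%E.
  rewrite -Pc; apply: le_integral_nm => w; rewrite lee_fin ?powR_ge0 //.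
  apply: ge0_ler_powR => //; rewrite ?nnegrE //.
  exact: le_trans (normr_ge0 _) (fbound w).
have If0 : (0 <= \int[P]_w ((`|f (conf alpha w)| `^ gamma)%:E))%E.
  by apply: integral_ge0 => w _; rewrite lee_fin powR_ge0.
have loc : @local_fun R d 1 f.
  move=> A mA; apply: sub_gen_smallest.
  exists 0, (h @^-1` A); split; last split.
  - exists [ffun _ => ord0]; apply/rowP => i; rewrite !mxE ffunE.  by [].
  - by have := hmeas measurableT A mA; rewrite setTI.
  - by [].
have := mix 1 K f isT K0 loc intf int0 (le_lt_trans If (ltry _)).
move=> hmix.
have N0 : (K%:R ^+ d : R) != 0 by rewrite expf_neq0 // pnatr_eq0 -lt0n.
have pw : forall w : T, `|lamhat K m w - lam| <=
    `|(K%:R ^+ d)^-1 * \sum_(t : {ffun 'I_d -> 'I_K}) f (tau_shift (boxpt t) (conf alpha w))|.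
  move=> w.
  have -> : (K%:R ^+ d)^-1 * \sum_(t : {ffun 'I_d -> 'I_K}) f (tau_shift (boxpt t) (conf alpha w)) =
      M0 * ((K%:R ^+ d)^-1 * \sum_(t : {ffun 'I_d -> 'I_K}) fermi (lam + alpha (boxpt t) w) - m).
    rewrite /f /h /tau_shift /conf.
    under eq_bigr do rewrite addr0 (addrC (alpha _ w)).
    rewrite -mulr_sumr mulrCA sumrB sum_cst mulrBr mulrA mulVf ?mul1r //.
  have em := emp K m w K0 m01.
  case: (lerP lam (lamhat K m w)) => hl.
    have := @key_sum _ d K (fun t => alpha (boxpt t) w) _ _ _ _ K0 lo0 hl (hrange w) (fun t => lrange _ w).
    rewrite -em => hk.
    apply: (le_trans hk); rewrite ler_normr; apply/orP; right.
    by rewrite -[X in _ <= X]mulrN opprB.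
  have := @key_sum _ d K (fun t => alpha (boxpt t) w) _ _ _ _ K0 lo0 (ltW hl) (fun t => lrange _ w) (hrange w).
  rewrite -em => hk.
  exact: (le_trans hk (ler_norm _)).
apply: (le_trans (@le_integral_nm _ _ _ P _
  (fun w => (`|(K%:R ^+ d)^-1 * \sum_(t : {ffun 'I_d -> 'I_K}) f (tau_shift (boxpt t) (conf alpha w))| `^ gamma)%:E) _ _)).
- by move=> w; rewrite lee_fin powR_ge0.
- move=> w; rewrite lee_fin; apply: ge0_ler_powR => //; rewrite ?nnegrE //.
apply: (le_trans hmix).
have Kp : (1%:R / K%:R : R) `^ (gamma * d%:R / 2) = K%:R `^ (- (gamma * d%:R / 2)).
  by rewrite div1r -powR_inv1 ?ler0n // -powRrM mulN1r.
rewrite Kp.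
move: If0 If.
set I := (\int[P]_w _)%E.
case: I => [i| |] //= i0 iE.
rewrite -EFinM lee_fin.
move: i0 iE; rewrite !lee_fin => i0 iE.
set X := K%:R `^ _.
have X0 : 0 <= X by apply: powR_ge0.
set Q := (E ^+ 5) `^ gamma.
set mx := Num.max Cmix 0.
have c1 : Cmix <= mx by rewrite /mx le_max lexx.
have c2 : 0 <= mx by rewrite /mx le_max lexx orbT.
have : Cmix * X * i <= mx * X * i by rewrite ler_wpM2r // ler_wpM2r.
move=> h1; apply: (le_trans h1).
rewrite -mulrA -[X in _ <= X]mulrA; apply: ler_wpM2l => //.
by rewrite mulrC ler_wpM2r.
Qed.
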